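(* Let $q$ be an odd prime power, $g\ge 1$, and let $\mathcal{Y}$ be the hyperelliptic curve over $\mathbb{F}_q$ with affine equation $y^2=f(x)$, $f(x)=x^{2g+1}+a_{2g}x^{2g}+\dots+a_0\in\mathbb{F}_q[x]$, of genus $g$. Let $X,T$ be positive integers, let $\gamma=\#\{z\in\mathbb{F}_q: f(z)=0\}$, and let $J^{\mathcal{Y}}_{\max}$ be the largest integer $J$ for which there exist pairwise distinct $\lambda_1,\dots,\lambda_J\in\mathbb{F}_q$ with $f(\lambda_j)\ne0$ for all $j$ such that, setting $h=\prod_{j=1}^J(x-\lambda_j)$, the curve $\mathcal{Y}$ has at least $2J+X+T+6g+2$ affine $\mathbb{F}_q$-rational points $P$ with $y(P)\ne 0$ and $h(P)\ne0$. Then $$J^{\mathcal{Y}}_{\max}=\begin{cases}\left\lfloor\dfrac{2q-(X+T+6g+2\gamma+2)}{4}\right\rfloor & \text{if } \#\mathcal{Y}(\mathbb{F}_q)\ge q+3g+\dfrac{X+T+4}{2},\\[2mm] \left\lfloor\dfrac{\#\mathcal{Y}(\mathbb{F}_q)-(X+T+6g+3+\gamma)}{2}\right\rfloor & \text{otherwise.}\end{cases}$$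
   Context: $\#\mathcal{Y}(\mathbb{F}_q)$ counts all $\mathbb{F}_q$-rational points of (the non-singular model of) $\mathcal{Y}$, including its unique point at infinity $P_\infty$. Interpretation: in the known XSTPIR construction from hyperelliptic curves, with $L=2J-g$ and $N=L+X+T+6g+2$, one needs $N+g=2J+X+T+6g+2$ rational points different from $P_\infty$, not on $y=0$ and not zeros of $h$; this yields an $X$-secure $T$-private PIR scheme of rate $L/N$, so $J^{\mathcal{Y}}_{\max}$ determines the maximal rate of that construction. *)

(* Defs.v *)
From HB Require Import structures.
From mathcomp Require Import all_boot all_order all_algebra.
From mathcomp Require Import separable.
Set Implicit Arguments. Unset Strict Implicit. Unset Printing Implicit Defensive.
Import Order.TTheory GRing.Theory Num.Theory.
Local Open Scope ring_scope.

Definition affine_points (F : finFieldType) (f : {poly F}) : {set F * F} :=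
  [set P : F * F | P.2 ^+ 2 == f.[P.1]].

(* #Y(F_q): rational points of the nonsingular model of y^2 = f(x), f squarefree
   of odd degree, char F <> 2: the (smooth) affine points plus the unique point
   at infinity P_oo. *)
Definition nb_points (F : finFieldType) (f : {poly F}) : nat :=
  (#|affine_points f| + 1)%N.

Definition nb_roots (F : finFieldType) (f : {poly F}) : nat :=
  #|[set z : F | root f z]|.

Definition hpoly (F : finFieldType) (J : nat) (lam : 'I_J -> F) : {poly F} :=
  \prod_(j < J) ('X - (lam j)%:P).

Definition admissibleJ (F : finFieldType) (f : {poly F}) (g X T J : nat) : Prop :=
  exists lam : 'I_J -> F,
    injective lam /\ (forall j, f.[lam j] != 0) /\
    (2 * J + X + T + 6 * g + 2 <=
       #|[set P in affine_points f | (P.2 != 0%R) && ((hpoly lam).[P.1] != 0%R)]|)%N.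

(* Main.v *)
Require Import Defs.
From HB Require Import structures.
From mathcomp Require Import all_boot all_order all_algebra.
From mathcomp Require Import separable intdiv.
From mathcomp Require Import finfield zify.
Import Order.TTheory GRing.Theory Num.Theory.
Local Open Scope ring_scope.

Lemma two_neq0 (F : finFieldType) : odd #|F| -> (2%:R : F) != 0.
Proof.
move=> oF; apply/negP => h.
have ch : (2 \in [pchar F])%N by rewrite inE /= h.
have := card_pprimeChar ch.
change #|pPrimeCharType ch| with #|F|.
move=> E; move: oF; rewrite E oddX /=.
case: (logn _ _) E => [|//] /= E1.
by have := finNzRing_gt1 F; rewrite E1.
Qed.

Section S.
Variables (F : finFieldType) (f : {poly F}).
Definition Sq := [set x : F | (f.[x] != 0) && [exists y : F, y ^+ 2 == f.[x]]].
Definition NS := [set x : F | (f.[x] != 0) && ~~ [exists y : F, y ^+ 2 == f.[x]]].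

Lemma Ycount (oF : odd #|F|) x :
  #|[set y : F | (y != 0) && (y ^+ 2 == f.[x])]| = ((x \in Sq) * 2)%N.
Proof.
rewrite inE.
case: eqP => [->|fx0] /=.
  rewrite (_ : [set _ | _] = set0) ?cards0 //; apply/setP => y; rewrite !inE.
  by rewrite sqrf_eq0 andNb.
case: existsP => [[y0 /eqP y0E]|nE] /=; last first.
  rewrite (_ : [set _ | _] = set0) ?cards0 //; apply/setP => y; rewrite !inE.
  by apply/negP => /andP[_ /eqP h]; apply: nE; exists y; rewrite h.
have y00 : y0 != 0 by apply/eqP => h; apply: fx0; rewrite -y0E h expr0n.
rewrite (_ : [set _ | _] = [set y0; - y0]).
  rewrite cards2; case: eqP => // h.
  have : (2%:R : F) * y0 == 0 by rewrite mulr2n mulrDl mul1r {2}h subrr.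
  by rewrite mulf_eq0 (negbTE (@two_neq0 F oF)) (negbTE y00).
apply/setP => y; rewrite !inE -y0E eqf_sqr.
case: (y =P 0) => [->|] //=.
by rewrite eq_sym (negbTE y00) /= eq_sym oppr_eq0 (negbTE y00).
Qed.

Lemma cntA (oF : odd #|F|) (A : {set F}) :
  #|[set P in affine_points f | (P.2 != 0) && (P.1 \in A)]| = (2 * #|Sq :&: A|)%N.
Proof.
set B := [set P in _ | _].
have -> : #|B| = (\sum_(x : F) \sum_(y : F) (if (x, y) \in B then 1 else 0))%N.
  rewrite pair_bigA /= -sum1_card big_mkcond /=.
  by apply: eq_bigr => -[x y] _.
rewrite (eq_bigr (fun x => if x \in Sq :&: A then 2 else 0)%N).
  by rewrite -big_mkcond sum_nat_const mulnC.
move=> x _.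
rewrite -big_mkcond (eq_bigl (fun y => y \in [set y : F | (y != 0) && (y ^+ 2 == f.[x])] :&: [set _ | x \in A])); last first.
  move=> y; rewrite /B /affine_points !inE /=.
  by case: (y ^+ 2 == _); case: (y != 0).
rewrite sum1_card.
rewrite inE; case: (x \in A) => /=.
  by rewrite setIT Ycount //; case: (x \in Sq).
by rewrite setI0 cards0; case: (x \in Sq).
Qed.

Lemma card_aff (oF : odd #|F|) :
  #|affine_points f| = (nb_roots f + 2 * #|Sq|)%N.
Proof.
rewrite -(cardsID [set P : F * F | P.2 != 0]) addnC.
congr (_ + _)%N.
  rewrite /nb_roots -(card_imset _ (f := fun z : F => (z, 0 : F))); last first.
    by move=> a b [].
  apply: eq_card => -[x y]; rewrite !inE /=.
  apply/andP/imsetP => [[/negPn/eqP -> /eqP h]|[z]].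
    by exists x => //; rewrite inE rootE -h expr0n.
  by rewrite inE rootE => /eqP h [-> ->]; rewrite eqxx expr0n h.
rewrite -(setIT Sq) -cntA //; apply: eq_card => -[x y].
by rewrite !inE andbT andbC.
Qed.

Lemma card_part : (nb_roots f + #|Sq| + #|NS|)%N = #|F|.
Proof.
rewrite /nb_roots -addnA -(cardsC [set z : F | root f z]).
congr (_ + _)%N.
rewrite -[RHS](cardsID [set x : F | [exists y : F, y ^+ 2 == f.[x]]]).
by congr (_ + _)%N; apply: eq_card => x; rewrite /Sq /NS !inE rootE // andbC.
Qed.
End S.
Arguments Sq {F} f.
Arguments NS {F} f.

Lemma hpolyE (F : finFieldType) (J : nat) (lam : 'I_J -> F) x :
  ((hpoly lam).[x] != 0) = (x \notin [set lam j | j in 'I_J]).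
Proof.
rewrite /hpoly horner_prod; apply/idP/idP.
  move=> h; apply/imsetP => -[j _ xE]; move: h; apply/negP/negPn.
  by apply/prodf_eq0; exists j => //; rewrite hornerXsubC xE subrr.
move=> h; apply/negP => /prodf_eq0 [j _]; rewrite hornerXsubC subr_eq0 => /eqP xE.
by move/imsetP: h; apply; exists j.
Qed.

Lemma exists_sub (T : finType) (A : {set T}) k :
  (k <= #|A|)%N -> exists B : {set T}, B \subset A /\ #|B| = k.
Proof.
move=> hk; exists [set x in take k (enum A)]; split.
  by apply/subsetP => x; rewrite inE => /mem_take; rewrite mem_enum.
have /card_uniqP u : uniq (take k (enum A)) by rewrite take_uniq ?enum_uniq.
by rewrite cardsE u size_takel // -cardE.
Qed.

Definition PJ (F : finFieldType) (f : {poly F}) (g X T J : nat) : bool :=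
  (2 * J + (X + T + 6 * g + 2) <= 2 * #|Sq f|)%N &&
  (4 * J + (X + T + 6 * g + 2) <= 2 * #|Sq f| + 2 * #|NS f|)%N.

Arguments PJ {F} f g X T J.

Lemma good_card (F : finFieldType) (f : {poly F}) (oF : odd #|F|) J (lam : 'I_J -> F) :
  #|[set P in affine_points f | (P.2 != 0%R) && ((hpoly lam).[P.1] != 0%R)]|
  = (2 * (#|Sq f| - #|Sq f :&: [set lam j | j in 'I_J]|))%N.
Proof.
set im := [set lam j | j in 'I_J].
have -> : #|[set P in affine_points f | (P.2 != 0%R) && ((hpoly lam).[P.1] != 0%R)]|
   = #|[set P in affine_points f | (P.2 != 0%R) && (P.1 \in ~: im)]|.
  by apply: eq_card => P; rewrite !inE hpolyE.
rewrite cntA // -(cardsID im (Sq f)) addKn setDE.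
by [].
Qed.

Lemma adm_P (F : finFieldType) (f : {poly F}) (oF : odd #|F|) g X T J :
  admissibleJ f g X T J -> PJ f g X T J.
Proof.
move=> [lam [inj [fl cnt]]].
move: cnt; rewrite good_card //.
set im := [set lam j | j in 'I_J].
have cim : #|im| = J by rewrite card_imset // card_ord.
have h1 : (#|im :\: Sq f| <= #|NS f|)%N.
  apply: subset_leq_card; apply/subsetP => x; rewrite !inE.
  case/andP => nS /imsetP [j _ xE]; move: nS; rewrite xE (fl j) /= => ->.
  by [].
have h2 := cardsID (Sq f) im.
have h3 : (#|Sq f :&: im| <= #|Sq f|)%N by apply: subset_leq_card; apply: subsetIl.
rewrite setIC in h2.
rewrite /PJ; move=> h; apply/andP; split; lia.
Qed.

Lemma P_adm (F : finFieldType) (f : {poly F}) (oF : odd #|F|) g X T J :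
  PJ f g X T J -> admissibleJ f g X T J.
Proof.
rewrite /PJ => /andP [hA hB].
set a := minn J #|NS f|; set b := (J - a)%N.
have [B1 [sB1 cB1]] := @exists_sub _ (NS f) a (geq_minr _ _).
have hb : (b <= #|Sq f|)%N by rewrite /b /a; lia.
have [B2 [sB2 cB2]] := @exists_sub _ (Sq f) b hb.
set B := B1 :|: B2.
have dis : B1 :&: B2 = set0.
  apply/setP => x; rewrite !inE; apply/negP => /andP [/(subsetP sB1) h1 /(subsetP sB2) h2].
  by move: h1 h2; rewrite !inE => /andP [_ /negbTE ->]; rewrite andbF.
have cB : #|B| = J by rewrite cardsU dis cards0 subn0 cB1 cB2 /b /a; lia.
pose lam := fun j : 'I_J => nth 0 (enum B) j.
have sz : size (enum B) = J by rewrite -cardE.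
have lamB : forall j, lam j \in B.
  by move=> j; rewrite -mem_enum mem_nth // sz.
exists lam; split; [|split].
- move=> i j /eqP; rewrite /lam nth_uniq ?sz ?enum_uniq // => /eqP h.
  exact: val_inj.
- move=> j; have := lamB j; rewrite inE => /orP [/(subsetP sB1)|/(subsetP sB2)];
  by rewrite inE => /andP [].
- rewrite good_card //.
  have : (#|Sq f :&: [set lam j | j in 'I_J]| <= b)%N.
    rewrite -cB2; apply: subset_leq_card; apply/subsetP => x; rewrite inE.
    case/andP => xS /imsetP [j _ xE].
    have := lamB j; rewrite -xE inE => /orP [/(subsetP sB1)|//].
    by move: xS; rewrite !inE => /andP [_ ->]; rewrite andbF.
  move: hA hB; rewrite /b /a; move: (#|Sq f :&: _|) (#|Sq f|) (#|NS f|) => k s n; lia.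
Qed.

Theorem theorem4p4 (F : finFieldType) (g X T : nat) (f : {poly F}) (Jmax : nat) :
  odd #|F| ->
  (1 <= g)%N -> (0 < X)%N -> (0 < T)%N ->
  f \is monic -> size f = (2 * g + 2)%N -> separable_poly f ->
  admissibleJ f g X T Jmax ->
  (forall J : nat, admissibleJ f g X T J -> (J <= Jmax)%N) ->
  Jmax%:Z =
    if (2 * #|F| + 6 * g + X + T + 4 <= 2 * nb_points f)%N
    then (((2 * #|F|)%:Z - (X + T + 6 * g + 2 * nb_roots f + 2)%:Z) %/ 4)%Z
    else (((nb_points f)%:Z - (X + T + 6 * g + 3 + nb_roots f)%:Z) %/ 2)%Z.
Proof.
move=> oF _ _ _ _ _ _ adm mx.
have P1 := @adm_P F f oF _ _ _ _ adm.
have P2 : ~~ PJ f g X T Jmax.+1.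
  by apply/negP => /(@P_adm F f oF) /mx; rewrite ltnn.
have np : nb_points f = (nb_roots f + 2 * #|Sq f| + 1)%N by rewrite /nb_points card_aff.
rewrite np -(@card_part F f).
move: P1 P2; rewrite /PJ.
move: (nb_roots f) (#|Sq f|) (#|NS f|) => r s n.
case: ifP => hc /andP [h1 h2] /nandP [h3|h3]; lia.
Qed.
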